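(* Let $C$ be a finite set of base cues and let $c_1,\ldots,c_m \subseteq C$ be the public cue sets of accounts $A_1,\ldots,A_m$, with $C=\bigcup_{j=1}^m c_j$. For each account $A_j$ let its visitation schedule $\tau_0^j<\tau_1^j<\cdots$ be the arrival times of a Poisson process of rate $\lambda_j\ge 0$, these processes being independent. For each $\hat c\in C$ let $t_0^{\hat c}<t_1^{\hat c}<\cdots$ be its rehearsal schedule. For $t>0$ let $X_t=\sum_{\hat c\in C} X_{t,\hat c}$, where \[X_{t,\hat c}=\left|\left\{ i ~:~ t_{i+1}^{\hat c}\le t \ \wedge\ \forall j,k:\ \left(\hat c\notin c_j \ \vee\ \tau_k^j\notin [t_i^{\hat c},t_{i+1}^{\hat c})\right)\right\}\right|.\] For each $\hat c\in C$ let $i^*_{\hat c}=\left(\arg\max_x \{x : t_x^{\hat c}<t\}\right)-1$. Then \[\mathbb{E}[X_t]=\sum_{\hat c\in C}\ \sum_{i=0}^{i^*_{\hat c}} \exp\!\left(-\Big(\sum_{j:\,\hat c\in c_j}\lambda_j\Big)\big(t_{i+1}^{\hat c}-t_i^{\hat c}\big)\right).\]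
   Context: A rehearsal schedule for a cue $\hat c$ is an increasing sequence of times $t_0^{\hat c}<t_1^{\hat c}<\cdots$; for each $i\ge 0$ there is a rehearsal requirement that the cue be rehearsed at least once in $[t_i^{\hat c},t_{i+1}^{\hat c})$. The requirement is naturally satisfied if some account $A_j$ with $\hat c\in c_j$ is visited during that window; $X_{t,\hat c}$ counts the requirements with window ending by time $t$ that are not naturally satisfied (the extra rehearsals for $\hat c$), and $X_t$ is the total number of extra rehearsals. *)

(* Defs.v *)
From HB Require Import structures.
From mathcomp Require Import all_boot all_order all_algebra.
From mathcomp Require Import all_classical all_reals all_analysis measurable_realfun.
Set Implicit Arguments. Unset Strict Implicit. Unset Printing Implicit Defensive.
Import Order.TTheory GRing.Theory Num.Theory.
Local Open Scope classical_set_scope.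
Local Open Scope ring_scope.

Definition npts {R : realType} (A : set R) (a b : R) : \bar R :=
  (\esum_(x in A `&` `[a, b[) 1)%E.

(* S j w is the set of arrival times {tau_0^j, tau_1^j, ...} of account j in
   outcome w.  [indep_poisson_processes P lam S]: the S j are independent
   (homogeneous) Poisson processes on [0, +oo) of rates lam j, characterized by
   their finite-dimensional distributions: for any finite family of windows
   [a_l, b_l) (pairwise disjoint when they belong to the same process), the
   counts are jointly distributed as independent Poisson(lam (J l) * (b_l - a_l))
   variables. *)
Definition indep_poisson_processes d (T : measurableType d) (R : realType)
  (P : probability T R) (m : nat) (lam : 'I_m -> R) (S : 'I_m -> T -> set R)
  : Prop :=
  [/\ (forall j w, S j w `<=` [set x | 0 <= x]),
      (forall j a b, measurable_fun [set: T] (fun w : T => (npts (S j w) a b : \bar R))) &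
      (forall (n : nat) (J : 'I_n -> 'I_m) (a b : 'I_n -> R) (k : 'I_n -> nat),
          (forall l, 0 <= a l <= b l) ->
          (forall l l', l != l' -> J l = J l' -> b l <= a l' \/ b l' <= a l) ->
          P (\bigcap_(l in [set: 'I_n])
               [set w | npts (S (J l) w) (a l) (b l) = ((k l)%:R)%:E])
          = (\prod_(l < n) poisson_prob (lam (J l) * (b l - a l)) (k l) [set k l])%E)].

Definition extra_rehearsals {R : realType} (T : Type) (C : finType) (m : nat)
  (cs : 'I_m -> {set C}) (S : 'I_m -> T -> set R) (s : nat -> R) (chat : C)
  (t : R) (w : T) : \bar R :=
  let A := [set i : nat | s i.+1 <= t /\
        (forall (j : 'I_m) (x : R), S j w x ->
            chat \notin cs j \/ ~ (s i <= x < s i.+1))] in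
  (\esum_(i in A) 1)%E.

(* [istar_succ s t n]: n = i*+1 = argmax_x {x : s x < t}; when that set is
   empty, i* is taken so that the sum over 0 <= i <= i* is empty (n = 0). *)
Definition istar_succ {R : realType} (s : nat -> R) (t : R) (n : nat) : Prop :=
  (s n < t /\ forall x, s x < t -> (x <= n)%N) \/
  ((forall x, t <= s x) /\ n = 0%N).

(* Main.v *)
Require Import Defs.
From HB Require Import structures.
From mathcomp Require Import all_boot all_order all_algebra.
From mathcomp Require Import all_classical all_reals all_analysis measurable_realfun.
Import Order.TTheory GRing.Theory Num.Theory.
Local Open Scope classical_set_scope.
Local Open Scope ring_scope.

Lemma npts0P {R : realType} (A : set R) a b :
  npts A a b = 0%E <-> (forall x, A x -> ~ (a <= x < b)).
Proof.
split.
- move=> H x Ax hx.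
  have : (1 <= npts A a b)%E.
    rewrite /npts; apply: esum_ge; exists [set x].
      split; first exact: finite_set1.
      by move=> y ->; split => //=; rewrite in_itv /= hx.
    by rewrite fsbig_set1.
  by rewrite H lee_fin ler10.
- move=> H; rewrite /npts esum1 // => x [Ax]; rewrite /= in_itv /= => hx.
  by case: (H x Ax hx).
Qed.

Lemma poisson0val (R : realType) (r : R) k : 0 <= r ->
  poisson_prob r k [set 0%N] = (expR (- r))%:E.
Proof.
move=> r0; rewrite /poisson_prob; case: ifPn => [rpos|].
- rewrite esum_set1 ?lee_fin ?poisson_pmf_ge0 // /poisson_pmf rpos expr0 mul1r.
  by rewrite fact0 invr1 mul1r.
- rewrite -leNgt => r0'.
  have -> : r = 0 by apply/le_anti/andP.
  by rewrite diracE mem_set // oppr0 expR0.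
Qed.

Lemma istar_iff {R : realType} (s : nat -> R) t K :
  (forall i, s i < s i.+1) -> (forall x, s x <> t) -> istar_succ s t K ->
  forall i, (s i.+1 <= t) <-> (i < K)%N.
Proof.
move=> Hinc Hnt HK i.
have mono := homo_ltn (@lt_trans _ _) Hinc.
case: HK => [[sK HKx]|[Hge ->]].
- split.
  + move=> h; apply: HKx; rewrite lt_neqAle h andbT; apply/eqP; exact: Hnt.
  + move=> h; rewrite (le_trans _ (ltW sK)) //.
    move: h; rewrite leq_eqVlt => /orP[/eqP -> //|/mono/ltW //].
- split => // h; exfalso; apply: (Hnt i.+1); apply/le_anti; rewrite h Hge.
  done.
Qed.


Theorem theorem1 (d : measure_display) (T : measurableType d) (R : realType)
  (P : probability T R) (C : finType) (m : nat) (cs : 'I_m -> {set C})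
  (Hcover : forall x : C, exists j : 'I_m, x \in cs j)
  (lam : 'I_m -> R) (Hlam : forall j, 0 <= lam j)
  (S : 'I_m -> T -> set R) (HS : indep_poisson_processes P lam S)
  (sched : C -> nat -> R) (Hinc : forall c i, sched c i < sched c i.+1)
  (H0 : forall c, 0 <= sched c 0%N)
  (t : R) (Ht : 0 < t) (Hnt : forall c x, sched c x <> t)
  (K : C -> nat) (HK : forall c, istar_succ (sched c) t (K c)) :
  (\int[P]_w (\sum_(c : C) extra_rehearsals cs S (sched c) c t w))%E
  = (\sum_(c : C) \sum_(i < K c)
       expR (- (\sum_(j : 'I_m | c \in cs j) lam j)
               * (sched c i.+1 - sched c i)))%:E.
Proof.
case: (HS) => _ HSm HSp.
pose E c i := [set w | forall j, c \in cs j ->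
   npts (S j w) (sched c i) (sched c i.+1) = 0%E].
have mE : forall c i, measurable (E c i).
  move=> c i.
  have -> : E c i = \bigcap_(j in [set j | c \in cs j])
     ((fun w => npts (S j w) (sched c i) (sched c i.+1)) @^-1` [set 0%E]).
    by apply/seteqP; split => w /= H j /H.
  apply: fin_bigcap_measurable => [|j _]; first exact: finite_finset.
  by rewrite -[X in measurable X]setTI; apply: HSm.
have Hext : forall c w, extra_rehearsals cs S (sched c) c t w
    = (\sum_(i < K c) (\1_(E c i) w)%:E)%E.
  move=> c w; rewrite /extra_rehearsals.
  set A := [set i | _].
  have Kiff := @istar_iff _ _ _ _ (Hinc c) (Hnt c) (HK c).
  have AE : forall i, A i <-> ((i < K c)%N /\ E c i w).
    move=> i; rewrite /A /E /=; split.
    - move=> [h1 h2]; split; first exact/Kiff.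
      move=> j cj; apply/npts0P => x Sx.
      by case: (h2 j x Sx) => //; rewrite cj.
    - move=> [h1 h2]; split; first exact/Kiff.
      move=> j x Sx; case cj: (c \in cs j); last by left.
      by right; move/npts0P: (h2 j cj); apply.
  rewrite esum_mkcond (_ : esum _ _ = \esum_(i in `I_(K c)) (\1_(E c i) w)%:E)%E.
    rewrite esum_fset; first by rewrite -fsbig_ord.
      exact: finite_II.
    by move=> i _; rewrite indicE lee_fin ler0n.
  rewrite [RHS]esum_mkcond; apply: eq_esum => i _.
  case: (boolP (i \in A)) => iA.
    have [h1 h2] := (AE i).1 (set_mem iA).
    by rewrite mem_set // indicE mem_set.
  case: (boolP (i \in `I_(K c))) => // iK.
  rewrite indicE memNset // => Ei.
  by apply: (negP iA); apply: mem_set; apply/AE; split => //; exact: set_mem iK.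
have PE : forall c i, P (E c i) = (expR (- (\sum_(j : 'I_m | c \in cs j) lam j)
               * (sched c i.+1 - sched c i)))%:E.
  move=> c i.
  pose p := [pred j : 'I_m | c \in cs j].
  have mono := homo_ltn (@lt_trans _ _) (Hinc c).
  have a0 : 0 <= sched c i.
    case: i => [|i]; first exact: H0.
    exact/(le_trans (H0 c))/ltW/mono.
  have h1 : forall l : 'I_#|p|, 0 <= sched c i <= sched c i.+1.
    by move=> _; rewrite a0 /= ltW.
  have h2 : forall l l' : 'I_#|p|, l != l' -> enum_val l = enum_val l' ->
      sched c i.+1 <= sched c i \/ sched c i.+1 <= sched c i.
    by move=> l l' nl /enum_val_inj E'; rewrite E' eqxx in nl.
  have HP := HSp #|p| (fun l => enum_val l) (fun _ => sched c i) (fun _ => sched c i.+1)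
     (fun _ => 0%N) h1 h2.
  have <- : \bigcap_(l in [set: 'I_#|p|])
     [set w | npts (S (enum_val l) w) (sched c i) (sched c i.+1) = ((0%N)%:R)%:E]
     = E c i.
    apply/seteqP; split => w /=.
    - move=> H j cj.
      have jp : j \in p by rewrite inE.
      by have := H (enum_rank_in jp j) I; rewrite enum_rankK_in.
    - move=> H l _; apply: H.
      by have := enum_valP l; rewrite inE.
  rewrite HP.
  under eq_bigr => l _ do rewrite poisson0val ?mulr_ge0 ?subr_ge0 ?Hlam ?ltW //.
  rewrite prodEFin -expR_sum; congr (expR _)%:E.
  rewrite sumrN mulNr -mulr_suml; congr (- (_ * _)).
  transitivity (\sum_(j in p) lam j); last by apply: eq_bigl => j; rewrite inE.
  by rewrite [RHS]big_enum_val.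
transitivity (\int[P]_w (\sum_(c : C) \sum_(i < K c) (\1_(E c i) w)%:E))%E.
  by apply: eq_integral => w _; apply: eq_bigr => c _; exact: Hext.
have mI : forall c i, measurable_fun [set: T] (fun w => (\1_(E c i) w)%:E : \bar R).
  by move=> c i; apply/measurable_EFinP; exact: measurable_indic.
rewrite ge0_integral_sum //; first last.
- by move=> c w _; apply: sume_ge0 => i _; rewrite indicE lee_fin ler0n.
- by move=> c; apply: emeasurable_sum => i; exact: mI.
rewrite -sumEFin; apply: eq_bigr => c _.
rewrite -sumEFin ge0_integral_sum //.
apply: eq_bigr => i _.
by rewrite integral_indic // setIT; exact: PE.
Qed.
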